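(* Let $L, H \in \mathcal{L}$ and $g = (w,t) \in S$ with $L^g \leq H$. Then: (a) $\zeta_{L,H,g} = \hat{\zeta}_{L,H,w} - \lambda^w_t$; (b) if $\zeta_{L,H,g} \in Z^1(L,T)$, then $\zeta_{L,H,h} \in Z^1(L,T)$ for all $h \in gT$; (c) there exist $\gamma \in Z^1(L,T)$ and $\sigma \in Z^1(H,T)$ with $C_L(\gamma)^g \leq C_H(\sigma)$ if and only if $\zeta_{L,H,g} \in Z^1(L,T)$; (d) (for $H = L$ and $\gamma \in Z^1(L,T)$) $g$ centralises $C_L(\gamma)$ if and only if $w$ centralises $L$ and $\zeta_{L,L,g} = \gamma^g - \gamma$, where $\gamma^g(l) = \gamma(l^g)^{g^{-1}}$.
   Context: Conventions: for a group $G$ acting on the right on an additive abelian group $M$, $Z^n(G,M)$, $B^n(G,M)$ are normalised cocycles and coboundaries; $\mathrm{Ext}(\tau)$ for $\tau \in Z^2(G,M)$ is $G\times M$ with $(g,m)(h,n) = (gh, m^h+n+\tau(g,h))$. Setting: $S$ is an infinite pro-$p$-group of finite coclass, $T = \gamma_\ell(S)$ ($\ell$ large) with $T\cong\mathbb{Z}_p^d$, $P=S/T$ finite, the series $T_0=T$, $T_{i+1}=[T_i,S]$ having all indices $p$; $T$ is an additive $P$-module via conjugation; $S = \mathrm{Ext}(\rho)$ with $\rho\in Z^2(P,T)$, $\epsilon: S \to P$ the projection, $T = \{(1,t)\}$; $g \in S$ acts on $P$ and $T$ via $\epsilon(g)$. For $L\leq P$, $\overline{L}=\epsilon^{-1}(L)$.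 $\mathcal{L}$ = elementary abelian $L\leq P$ with $\rho_L \in B^2(L,T)$. For $L\in\mathcal{L}$ fix a complement $C_L = \{c_L(l)\}$ to $T$ in $\overline{L}$, $c_L(l) = (l, t_L(l))$; $C_L(\delta) = \{(l,t_L(l)+\delta(l))\}$ for $\delta\in Z^1(L,T)$. For $L,H\in\mathcal{L}$, $g\in S$ with $L^g\leq H$: $\zeta_{L,H,g}: L\to S$, $l\mapsto (c_H(l^g)^{-1})^{g^{-1}} c_L(l)$ (values identified with elements of $T$). For $w\in P$: $\hat{\zeta}_{L,H,w}: L \to T$, $l \mapsto (t_L(l)^w - t_H(l^w) + \rho(l,w) - \rho(w,l^w))^{w^{-1}}$. For $t \in T$: $\lambda_t: L\to T$, $l \mapsto [t,l] := t^l - t$, and $\lambda_t^w: L \to T$, $l \mapsto [t,l^w]^{w^{-1}}$. *)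

(* Defs.v *)
(* Abstract setting of the extension S = Ext(rho) of a finite
   p-group P by an additive P-module T (right action). *)
From mathcomp Require Import all_boot all_algebra all_fingroup all_solvable.
Set Implicit Arguments. Unset Strict Implicit. Unset Printing Implicit Defensive.
Import GRing.Theory.
Local Open Scope ring_scope.
Local Open Scope group_scope.

Definition right_module (P : finGroupType) (T : zmodType) (act : T -> P -> T) :=
  [/\ forall t, act t 1 = t,
      forall t x y, act t (x * y) = act (act t x) y &
      forall s t x, act (s + t) x = act s x + act t x].

Definition Z2 (P : finGroupType) (T : zmodType) (act : T -> P -> T) (rho : P -> P -> T) :=
  [/\ forall x, rho 1 x = 0, forall x, rho x 1 = 0 &
      forall x y z, act (rho x y) z + rho (x * y) z = rho y z + rho x (y * z)].

Definition B2 (P : finGroupType) (T : zmodType) (act : T -> P -> T)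
    (A : {set P}) (rho : P -> P -> T) :=
  exists f : P -> T, f 1 = 0 /\
    {in A &, forall x y, rho x y = act (f x) y + f y - f (x * y)}.

(* 1-cocycles Z^1(A,T) (functions are only relevant on A) *)
Definition Z1 (P : finGroupType) (T : zmodType) (act : T -> P -> T)
    (A : {set P}) (d : P -> T) :=
  {in A &, forall x y, d (x * y) = act (d x) y + d y}.

Definition mulS (P : finGroupType) (T : zmodType) (act : T -> P -> T) (rho : P -> P -> T)
    (a b : P * T) : P * T :=
  (a.1 * b.1, act a.2 b.1 + b.2 + rho a.1 b.1).

Definition invS (P : finGroupType) (T : zmodType) (act : T -> P -> T) (rho : P -> P -> T)
    (a : P * T) : P * T :=
  (a.1^-1, - act a.2 a.1^-1 - rho a.1 a.1^-1).

Definition conjS (P : finGroupType) (T : zmodType) (act : T -> P -> T) (rho : P -> P -> T)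
    (x g : P * T) : P * T :=
  mulS act rho (mulS act rho (invS act rho g) x) g.

(* C_L = {(l, tL l) | l in L} is a subgroup of Ext(rho) (hence a complement
   to T in the preimage of L) *)
Definition complement_fn (P : finGroupType) (T : zmodType) (act : T -> P -> T)
    (rho : P -> P -> T) (L : {set P}) (tL : P -> T) :=
  {in L &, forall l l', mulS act rho (l, tL l) (l', tL l') = (l * l', tL (l * l'))}.

Definition inC (P : finGroupType) (T : zmodType) (L : {set P}) (tL d : P -> T)
    (x : P * T) : Prop :=
  x.1 \in L /\ x.2 = tL x.1 + d x.1.

(* zeta_{L,H,g}(l) = (c_H(l^g)^-1)^(g^-1) c_L(l), an element of T *)
Definition zeta (P : finGroupType) (T : zmodType) (act : T -> P -> T) (rho : P -> P -> T)
    (tL tH : P -> T) (g : P * T) (l : P) : T :=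
  (mulS act rho
     (conjS act rho (invS act rho (l ^ g.1, tH (l ^ g.1))) (invS act rho g))
     (l, tL l)).2.

Definition zetahat (P : finGroupType) (T : zmodType) (act : T -> P -> T) (rho : P -> P -> T)
    (tL tH : P -> T) (w : P) (l : P) : T :=
  act (act (tL l) w - tH (l ^ w) + rho l w - rho w (l ^ w)) w^-1.

(* lambda_t^w (l) = [t, l^w]^(w^-1) where [t,x] = t^x - t *)
Definition lambdaw (P : finGroupType) (T : zmodType) (act : T -> P -> T)
    (w : P) (t : T) (l : P) : T :=
  act (act t (l ^ w) - t) w^-1.

(* Main.v *)
Require Import Defs.
From mathcomp Require Import all_boot all_algebra all_fingroup all_solvable.
Set Implicit Arguments. Unset Strict Implicit. Unset Printing Implicit Defensive.
Import GRing.Theory.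
Local Open Scope ring_scope.
Local Open Scope group_scope.

Section S.
Variables (P : finGroupType) (T : zmodType) (act : T -> P -> T) (rho : P -> P -> T).
Hypothesis hm : right_module act.
Hypothesis hr : Z2 act rho.

Lemma act1 t : act t 1 = t. Proof. by case: hm. Qed.
Lemma actM t x y : act (act t x) y = act t (x * y). Proof. by case: hm => _ ->. Qed.
Lemma actD s t x : act (s + t) x = act s x + act t x. Proof. by case: hm. Qed.
Lemma act0 x : act 0 x = 0.
Proof. apply: (@addrI _ (act 0 x)); by rewrite -actD !addr0. Qed.
Lemma actN s x : act (- s) x = - act s x.
Proof. apply: (@addrI _ (act s x)); by rewrite -actD !subrr act0. Qed.
Lemma actB s t x : act (s - t) x = act s x - act t x.
Proof. by rewrite actD actN. Qed.
Lemma actK s x : act (act s x) x^-1 = s.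
Proof. by rewrite actM mulgV act1. Qed.
Lemma actKV s x : act (act s x^-1) x = s.
Proof. by rewrite actM mulVg act1. Qed.
Lemma rho1x x : rho 1 x = 0. Proof. by case: hr. Qed.
Lemma rhox1 x : rho x 1 = 0. Proof. by case: hr. Qed.
Lemma rhoC x y z : act (rho x y) z + rho (x * y) z = rho y z + rho x (y * z).
Proof. by case: hr. Qed.

Notation m := (mulS act rho).
Notation i := (invS act rho).

Lemma mA a b c : m (m a b) c = m a (m b c).
Proof.
case: a b c => [a1 a2] [b1 b2] [c1 c2]; rewrite /mulS /=; congr pair; first by rewrite mulgA.
rewrite !actD !actM -!addrA; congr (_ + (_ + _)); rewrite addrCA; congr (_ + _).
exact: rhoC.
Qed.
Lemma m1l a : m (1, 0) a = a.
Proof. case: a => a1 a2; by rewrite /mulS /= mul1g act0 add0r rho1x addr0. Qed.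
Lemma m1r a : m a (1, 0) = a.
Proof. case: a => a1 a2; by rewrite /mulS /= mulg1 act1 rhox1 !addr0. Qed.
Lemma mVl a : m (i a) a = (1, 0).
Proof.
case: a => a1 a2; rewrite /mulS /invS /=; congr pair; first by rewrite mulVg.
have := rhoC a1 a1^-1 a1; rewrite mulgV mulVg rho1x rhox1 !addr0 => E.
by rewrite actB actN actKV E addrAC subrK addrC subrr.
Qed.
Lemma mVr a : m a (i a) = (1, 0).
Proof.
case: a => a1 a2; rewrite /mulS /invS /=; congr pair; first by rewrite mulgV.
by rewrite addrA subrr add0r addrC subrr.
Qed.
Lemma mK a b : m (i a) (m a b) = b. Proof. by rewrite -mA mVl m1l. Qed.
Lemma mKV a b : m a (m (i a) b) = b.
Proof. by rewrite -mA mVr m1l. Qed.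
Lemma iK a : i (i a) = a.
Proof. by rewrite -[i (i a)]m1l -(mVr a) mA mVr m1r. Qed.

Lemma Kc l x w t : conjS act rho (l, x) (w, t) =
  (l ^ w, act x w + t - act t (l ^ w) + rho l w - rho w (l ^ w)).
Proof.
rewrite /conjS /mulS /invS /=; congr pair; first by rewrite conjgE mulgA.
have E1 := rhoC w^-1 l w.
have E2 := rhoC w w^-1 (l * w).
rewrite mulgV rho1x addr0 mulgA in E2.
rewrite !actD !actN !actM conjgE mulgA E2 opprD.
rewrite !addrA [LHS](ACl ((((4*6)*1)*((5*7)*2))*3)%AC) /= E1 addrK.
reflexivity.
Qed.

Lemma T1 z w t : m (1, z) (w, t) = m (w, t) (1, act z w).
Proof. by rewrite /mulS /= mul1g mulg1 rho1x rhox1 act1 !addr0 addrC. Qed.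

Lemma G1 g c d e : m (m (i g) c) g = m d (m (i g) (m e g)) ->
  m (m (m (i (i g)) (i d)) (i g)) c = e.
Proof.
move=> E.
have Ec : c = m g (m d (m (i g) e)).
  have := f_equal (fun x => m g (m x (i g))) E.
  rewrite /= !mA mVr m1r mKV.
  by rewrite m1r.
by rewrite Ec iK !mA mK mK mKV.
Qed.

Lemma zetaE tL tH w t l : zeta act rho tL tH (w, t) l
   = zetahat act rho tL tH w l - lambdaw act w t l.
Proof.
set Z := _ - _.
have EZ : act Z w = act (tL l) w - tH (l ^ w) + rho l w - rho w (l ^ w) - (act t (l ^ w) - t).
  by rewrite /Z /zetahat /lambdaw actB !actKV.
have Hc : m (m (i (w, t)) (l, tL l)) (w, t) =
     m (l ^ w, tH (l ^ w)) (m (i (w, t)) (m (1, Z) (w, t))).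
  rewrite T1 mK; have := Kc l (tL l) w t; rewrite /conjS => ->.
  rewrite EZ /mulS /= mulg1 act1 rhox1 addr0; congr pair.
  rewrite opprB !addrA [RHS](ACl ((((((1*3)*2)*6)*7)*4)*5)%AC) /= subrr add0r.
  reflexivity.
by rewrite /zeta /conjS (G1 Hc).
Qed.


Lemma lamM w s x y : lambdaw act w s (x * y) = act (lambdaw act w s x) y + lambdaw act w s y.
Proof.
rewrite /lambdaw !actB !actM !conjgE !mulgA !mulgK.
by rewrite addrA subrK.
Qed.

Lemma lamD w s u l : lambdaw act w (s + u) l = lambdaw act w s l + lambdaw act w u l.
Proof.
rewrite /lambdaw -actD; congr (act _ _); rewrite actD opprD.
rewrite !addrA [LHS](ACl (((1*3)*2)*4)%AC); reflexivity.
Qed.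

Lemma Kz tL tH l x w t : conjS act rho (l, x) (w, t) =
  (l ^ w, tH (l ^ w) + act (zeta act rho tL tH (w, t) l + (x - tL l)) w).
Proof.
rewrite Kc zetaE; congr pair.
rewrite actD /zetahat /lambdaw actB !actKV actB.
rewrite opprB !addrA [RHS](ACl ((((((((1*3)*(2*9))*8)*6)*7)*4)*5))%AC) /=.
by rewrite !subrr !add0r.
Qed.

Lemma commC g x : m g x = m x g <-> conjS act rho x g = x.
Proof.
rewrite /conjS; split => E; first by rewrite mA -E mK.
by rewrite -{1}E !mA mKV.
Qed.
End S.
Unset Implicit Arguments.
Set Strict Implicit.
Theorem lemma3p3 (p : nat) (P : finGroupType) (T : zmodType)
    (act : T -> P -> T) (rho : P -> P -> T)
    (L H : {group P}) (tL tH : P -> T) (w : P) (t : T) :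
  prime p -> p.-group [set: P] ->
  right_module act -> Z2 act rho ->
  (* L, H in the family \mathcal{L} *)
  p.-abelem L -> B2 act L rho -> p.-abelem H -> B2 act H rho ->
  (* the fixed complements C_L, C_H *)
  complement_fn act rho L tL -> complement_fn act rho H tH ->
  (* g = (w,t) with L^g <= H *)
  L :^ w \subset H ->
  [/\
   (* (a) *)
   {in L, forall l, zeta act rho tL tH (w, t) l
                    = zetahat act rho tL tH w l - lambdaw act w t l},
   (* (b) *)
   Z1 act L (zeta act rho tL tH (w, t)) ->
     forall s : T, Z1 act L (zeta act rho tL tH (mulS act rho (w, t) (1, s))),
   (* (c) *)
   (exists (gam sig : P -> T), [/\ Z1 act L gam, Z1 act H sig &
       {in L, forall l, inC H tH sig (conjS act rho (l, tL l + gam l) (w, t))}])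
     <-> Z1 act L (zeta act rho tL tH (w, t)) &
   (* (d) *)
   H = L -> forall gam : P -> T, Z1 act L gam ->
     ({in L, forall l, mulS act rho (w, t) (l, tL l + gam l)
                       = mulS act rho (l, tL l + gam l) (w, t)}
      <-> (w \in 'C(L) /\
           {in L, forall l, zeta act rho tL tL (w, t) l
                            = act (gam (l ^ w)) w^-1 - gam l}))].
Proof.
move=> _ _ hm hr _ _ _ _ _ _ sLH.
have Lw z : z \in L -> z ^ w \in H by move=> Lz; apply: (subsetP sLH); rewrite memJ_conjg.
split.
- by move=> l _; rewrite (zetaE hm hr).
- move=> Zg s x y Lx Ly.
  have -> : mulS act rho (w, t) (1, s) = (w, t + s).
    by rewrite /mulS /= mulg1 (act1 hm) (rhox1 hr) addr0.
  have Ez l : zeta act rho tL tH (w, t + s) l = zeta act rho tL tH (w, t) l - lambdaw act w s l.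
    by rewrite !(zetaE hm hr) (lamD hm) opprD addrA.
  rewrite !Ez Zg // (lamM hm) (actB hm).
  move: (zeta _ _ _ _ _ x) (zeta _ _ _ _ _ y) (lambdaw act w s x) (lambdaw act w s y) => a b c d.
  rewrite opprD !addrA.
  by rewrite [LHS](ACl (((1*3)*2)*4)%AC).
- split.
  + move=> [gam [sig [Zgam Zsig Hin]]].
    have HZ : {in L, forall l, zeta act rho tL tH (w, t) l = act (sig (l ^ w)) w^-1 - gam l}.
      move=> l Ll; have := Hin l Ll; rewrite /inC (Kz hm hr tL tH) /= => -[_].
      rewrite [tL l + _ - _]addrAC subrr add0r => /addrI E.
      by rewrite -E (actK hm) addrK.
    move=> x y Lx Ly.
    have ew : y ^ w * w^-1 = w^-1 * y by rewrite conjgE !mulgA mulgK.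
    rewrite !HZ ?groupM // conjMg Zsig ?Lw // Zgam // (actD hm) (actB hm) !(actM hm) ew.
    rewrite opprD !addrA [LHS](ACl (((1*3)*2)*4)%AC); reflexivity.
  + move=> Zz; exists (fun l => - zeta act rho tL tH (w, t) l), (fun _ => 0); split.
    * by move=> x y Lx Ly /=; rewrite Zz // (actN hm) opprD.
    * by move=> x y _ _; rewrite (act0 hm) addr0.
    * move=> l Ll; rewrite /inC (Kz hm hr tL tH) /=; split; first exact: Lw.
      by rewrite [tL l + _ - _]addrAC subrr add0r subrr (act0 hm).
- move=> eHL gam Zgam; subst H.
  split.
  + move=> H1.
    have Hl l : l \in L -> l ^ w = l /\
        tL (l ^ w) + act (zeta act rho tL tL (w, t) l + gam l) w = tL l + gam l.
      move=> Ll; have := H1 l Ll; move/(commC hm hr).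
      by rewrite (Kz hm hr tL tL) [tL l + _ - _]addrAC subrr add0r => -[-> ->].
    split.
    * apply/centP => l Ll; have [e1 _] := Hl l Ll.
      by rewrite /commute -{1}e1 conjgE mulKVg.
    * move=> l Ll; have [e1 e2] := Hl l Ll.
      rewrite e1 in e2 *; move/addrI: e2 => E.
      have E' : act (gam l) w^-1 = zeta act rho tL tL (w, t) l + gam l by rewrite -[in LHS]E (actK hm).
      by rewrite E' addrK.
  + move=> [Cw Hz] l Ll; apply/(commC hm hr).
    have e1 : l ^ w = l by rewrite conjgE -(centP Cw l Ll) mulKg.
    rewrite (Kz hm hr tL tL) [tL l + _ - _]addrAC subrr add0r e1 (Hz l Ll) e1 subrK (actKV hm).
    reflexivity.
Qed.
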